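(* Consider any iteration $(\ell,i)$ (Taylor or recursive) in the course of the MOFFTR algorithm described in the context. Then $\|s_{\ell,i}\|\le\alpha\,\|D(w_{\ell,i})\,|g_{\ell,i}|\,\|$.
   Context: Notation: $\|\cdot\|$ is the Euclidean norm (spectral norm for matrices); $|x|$ is the componentwise absolute value; for a positive vector $w$, $D(w)=\mathrm{diag}(1/w_1,\dots,1/w_m)$. Setting: $r\ge1$ levels; functions $f_\ell:\mathbb{R}^{n_\ell}\to\mathbb{R}$, $n_r=n$, $f_r=f$; for $\ell\ge2$ full-rank linear $R_\ell:\mathbb{R}^{n_\ell}\to\mathbb{R}^{n_{\ell-1}}$, $P_\ell:\mathbb{R}^{n_{\ell-1}}\to\mathbb{R}^{n_\ell}$ with $\omega P_\ell=R_\ell^T$, $\omega>0$. Algorithm MOFFTR$(\ell,h_\ell,x_{\ell,0},\epsilon_\ell,i^{\max}_\ell,\delta_\ell,w_{\ell,0})$ with constants $\kappa_R\in(0,1)$, $\alpha\ge1$, $\tau\in(0,1]$, $\kappa_B\ge1$, $\varsigma_j\in(0,1]$; $i=0$. Step 1: if $\ell<r$ and $\|P_{\ell+1}(x_{\ell,i}-x_{\ell,0})\|>\delta_\ell$, return $x_{\ell,i-1}$. Else $g_{\ell,i}=\nabla h_\ell(x_{\ell,i})$; if $\|g_{\ell,i}\|\le\epsilon_\ell$ or $i=i^{\max}_\ell$, return $x_{\ell,i}$. Step 2: $\widehat\Delta_{\ell,i}=D(w_{\ell,i})|g_{\ell,i}|$; $\Delta_{\ell,i}=\widehat\Delta_{\ell,i}$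 if $\ell=r$, else $\Delta_{\ell,i}=\min[2\delta_\ell/(\|P_{\ell+1}\|\|\widehat\Delta_{\ell,i}\|),1]\widehat\Delta_{\ell,i}$. For $i>0$ choose $w_{\ell,i}$ with $w_{\ell,i,j}\ge\varsigma_j$. If a Taylor step is chosen, go to Step 4. Step 3: choose $w_{\ell-1,0}$ with $w_{\ell-1,0,j}\ge\varsigma_j$, a variant-dependent ''lower-level weights large enough'' condition, and $\|D(w_{\ell-1,0})|R_\ell g_{\ell,i}|\|\le\alpha\|\Delta_{\ell,i}\|/\|P_\ell\|$. If $\ell=1$ or $\sum_j[R_\ell g_{\ell,i}]_j^2/w_{\ell-1,0,j}<\kappa_R\sum_j g_{\ell,i,j}^2/w_{\ell,i,j}$, go to Step 4. Otherwise (recursive iteration) $s_{\ell,i}=P_\ell[\mathrm{MOFFTR}(\ell-1,h_{\ell-1},R_\ell x_{\ell,i},\epsilon_{\ell-1},i^{\max}_{\ell-1},\alpha\|\Delta_{\ell,i}\|,w_{\ell-1,0})-R_\ell x_{\ell,i}]$ with $h_{\ell-1}(x_{\ell-1,0}+s)=f_{\ell-1}(x_{\ell-1,0}+s)+(R_\ell g_{\ell,i}-\nabla f_{\ell-1}(x_{\ell-1,0}))^Ts$, $x_{\ell-1,0}=R_\ell x_{\ell,i}$; go to Step 5. Step 4 (Taylor iteration): symmetric $B$ with $\|B\|\le\kappa_B$; step $s$ with $|s_j|\le\Delta_{\ell,i,j}$ and $g^Ts+\frac12s^TBs\le\tau(g^Ts^Q+\frac12(s^Q)^TBs^Q)$,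 $s^L_j=-\mathrm{sign}(g_j)\Delta_{\ell,i,j}$, $s^Q=\gamma s^L$, $\gamma=\min[1,|g^Ts^L|/((s^L)^TBs^L)]$ if $(s^L)^TBs^L>0$, else $\gamma=1$. Step 5: $x_{\ell,i+1}=x_{\ell,i}+s_{\ell,i}$, $i\leftarrow i+1$, go to Step 1. Top-level call MOFFTR$(r,f,x_{r,0},\epsilon_r,i^{\max}_r,+\infty,w_{r,0})$, $h_r=f$. *)

(* Defs.v *)
From HB Require Import structures.
From mathcomp Require Import all_boot all_order all_algebra.
From mathcomp Require Import all_classical all_reals all_analysis.
Set Implicit Arguments. Unset Strict Implicit. Unset Printing Implicit Defensive.
Import Order.TTheory GRing.Theory Num.Theory.
Import numFieldNormedType.Exports.
Local Open Scope classical_set_scope.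
Local Open Scope ring_scope.

Section MOFFTR.
Variable R : realType.

Definition enorm (n : nat) (v : 'cV[R]_n) : R := Num.sqrt (\sum_j (v j 0) ^+ 2).

Definition spnorm (m n : nat) (A : 'M[R]_(m, n)) : R :=
  sup [set enorm (A *m x) | x in [set x : 'cV[R]_n | enorm x <= 1]].

(** D(w)|g| : componentwise |g_j| / w_j. *)
Definition Dabs (n : nat) (w g : 'cV[R]_n) : 'cV[R]_n := \col_j (`|g j 0| / w j 0).

Definition dotv (n : nat) (u v : 'cV[R]_n) : R := \sum_j u j 0 * v j 0.

Definition qmodel (n : nat) (g : 'cV[R]_n) (B : 'M[R]_n) (s : 'cV[R]_n) : R :=
  dotv g s + 2^-1 * dotv s (B *m s).

Definition sLin (n : nat) (g D : 'cV[R]_n) : 'cV[R]_n :=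
  \col_j (- Num.sg (g j 0) * D j 0).

Definition sQuad (n : nat) (g D : 'cV[R]_n) (B : 'M[R]_n) : 'cV[R]_n :=
  let sL := sLin g D in
  let c := dotv sL (B *m sL) in
  let gamma := if 0 < c then Num.min 1 (`|dotv g sL| / c) else 1 in
  gamma *: sL.

Definition taylor_step (tau kB : R) (n : nat) (g D s : 'cV[R]_n) : Prop :=
  exists B : 'M[R]_n,
    B^T = B /\ spnorm B <= kB /\
    (forall j, `|s j 0| <= D j 0) /\
    qmodel g B s <= tau * qmodel g B (sQuad g D B).

Variable r : nat.
Variable n : nat -> nat.
Variable Rm : forall l : nat, 'M[R]_(n l.-1, n l).
Variable Pm : forall l : nat, 'M[R]_(n l, n l.-1).
Variable gf : forall l : nat, 'cV[R]_(n l) -> 'cV[R]_(n l).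
Variable eps : nat -> R.
Variable imax : nat -> nat.
Variables (kR alpha tau kB : R).
Variable vs : nat -> R.
(** the variant-dependent "lower-level weights large enough" condition,
    for a step at level k.+1 with weights w, gradient g and lower weights w0 *)
Variable LW : forall k : nat, 'cV[R]_(n k.+1) -> 'cV[R]_(n k.+1) -> 'cV[R]_(n k) -> Prop.

Definition Delta (k : nat) (delta : R) (Dh : 'cV[R]_(n k)) : 'cV[R]_(n k) :=
  if k == r then Dh
  else Num.min (2 * delta / (spnorm (Pm k.+1) * enorm Dh)) 1 *: Dh.

Arguments Delta : clear implicits.

(** Record of one iteration (level, w_{l,i}, g_{l,i}, s_{l,i}). *)
Definition iter_rec := {m : nat & ('cV[R]_(n m) * 'cV[R]_(n m) * 'cV[R]_(n m))%type}.

(** [mofftr k gh x0 delta w0 i xi xprev xout tr]: the main loop of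
    MOFFTR(k, h_k, x0, eps_k, imax_k, delta, w0), where gh is the gradient
    of h_k, being at the start (Step 1) of iteration i with current point
    xi = x_{k,i} and previous point xprev = x_{k,i-1}, eventually returns
    xout; tr lists all iterations performed from here on, including those
    performed inside recursive calls. *)
Inductive mofftr : forall k : nat, ('cV[R]_(n k) -> 'cV[R]_(n k)) -> 'cV[R]_(n k) ->
    R -> 'cV[R]_(n k) -> nat -> 'cV[R]_(n k) -> 'cV[R]_(n k) -> 'cV[R]_(n k) ->
    seq iter_rec -> Prop :=
| ret_out (k : nat) (gh : 'cV[R]_(n k) -> 'cV[R]_(n k)) (x0 : 'cV[R]_(n k)) (delta : R)
    (w0 : 'cV[R]_(n k)) (i : nat) (xi xprev : 'cV[R]_(n k)) :
    (k < r)%N -> enorm (Pm k.+1 *m (xi - x0)) > delta ->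
    @mofftr k gh x0 delta w0 i xi xprev xprev [::]
| ret_conv (k : nat) (gh : 'cV[R]_(n k) -> 'cV[R]_(n k)) (x0 : 'cV[R]_(n k)) (delta : R)
    (w0 : 'cV[R]_(n k)) (i : nat) (xi xprev : 'cV[R]_(n k)) :
    ((k < r)%N -> enorm (Pm k.+1 *m (xi - x0)) <= delta) ->
    (enorm (gh xi) <= eps k \/ i = imax k) ->
    @mofftr k gh x0 delta w0 i xi xprev xi [::]
| it_taylor (k : nat) (gh : 'cV[R]_(n k) -> 'cV[R]_(n k)) (x0 : 'cV[R]_(n k)) (delta : R)
    (w0 : 'cV[R]_(n k)) (i : nat) (xi xprev w s xout : 'cV[R]_(n k)) (tr : seq iter_rec) :
    ((k < r)%N -> enorm (Pm k.+1 *m (xi - x0)) <= delta) ->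
    eps k < enorm (gh xi) -> i <> imax k ->
    (i = 0%N -> w = w0) -> ((0 < i)%N -> forall j : 'I_(n k), vs j <= w j 0) ->
    taylor_step tau kB (gh xi) (Delta k delta (Dabs w (gh xi))) s ->
    @mofftr k gh x0 delta w0 i.+1 (xi + s) xi xout tr ->
    @mofftr k gh x0 delta w0 i xi xprev xout
      (existT _ k (w, gh xi, s) :: tr)
| it_rec (k : nat) (gh : 'cV[R]_(n k.+1) -> 'cV[R]_(n k.+1)) (x0 : 'cV[R]_(n k.+1)) (delta : R)
    (w0 : 'cV[R]_(n k.+1)) (i : nat) (xi xprev w : 'cV[R]_(n k.+1))
    (w0' xout' : 'cV[R]_(n k)) (tr1 : seq iter_rec) (xout : 'cV[R]_(n k.+1)) (tr : seq iter_rec) :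
    (1 <= k)%N ->
    ((k.+1 < r)%N -> enorm (Pm k.+2 *m (xi - x0)) <= delta) ->
    eps k.+1 < enorm (gh xi) -> i <> imax k.+1 ->
    (i = 0%N -> w = w0) -> ((0 < i)%N -> forall j : 'I_(n k.+1), vs j <= w j 0) ->
    let g := gh xi in
    let D := Delta k.+1 delta (Dabs w g) in
    (forall j : 'I_(n k), vs j <= w0' j 0) ->
    LW w g w0' ->
    enorm (Dabs w0' (Rm k.+1 *m g)) <= alpha * enorm D / spnorm (Pm k.+1) ->
    ~ (\sum_j (Rm k.+1 *m g) j 0 ^+ 2 / w0' j 0 < kR * \sum_j g j 0 ^+ 2 / w j 0) ->
    let x0' := Rm k.+1 *m xi in
    @mofftr k (fun y => @gf k y + (Rm k.+1 *m g - @gf k x0')) x0' (alpha * enorm D) w0'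
      0 x0' x0' xout' tr1 ->
    let s := Pm k.+1 *m (xout' - x0') in
    @mofftr k.+1 gh x0 delta w0 i.+1 (xi + s) xi xout tr ->
    @mofftr k.+1 gh x0 delta w0 i xi xprev xout
      (existT _ k.+1 (w, g, s) :: tr1 ++ tr).

End MOFFTR.

(* Main.v *)
Require Import Defs.
From HB Require Import structures.
From mathcomp Require Import all_boot all_order all_algebra.
From mathcomp Require Import all_classical all_reals all_analysis.
Import Order.TTheory GRing.Theory Num.Theory.
Import numFieldNormedType.Exports.
Local Open Scope ring_scope.

Lemma enorm_ge0 (R : realType) m (v : 'cV[R]_m) : 0 <= enorm v.
Proof. exact: sqrtr_ge0. Qed.

Lemma spnorm_ge0 (R : realType) m p (A : 'M[R]_(m, p)) : 0 <= spnorm A.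
Proof.
rewrite /spnorm; case: (pselect (has_sup [set enorm (A *m x) | x in [set x : 'cV[R]_p | enorm x <= 1]])) => h.
  have e0 : enorm (0 : 'cV[R]_p) = 0.
    by rewrite /enorm big1 ?sqrtr0 // => j _; rewrite mxE expr0n.
  have := sup_upper_bound h; move=> /(_ (enorm (A *m 0))) H.
  apply: le_trans (H _); first exact: enorm_ge0.
  by exists 0 => //=; rewrite e0.
by rewrite sup_out.
Qed.

Lemma enorm_le (R : realType) m (a b : 'cV[R]_m) :
  (forall j, `|a j 0| <= b j 0) -> enorm a <= enorm b.
Proof.
move=> h; rewrite /enorm ler_sqrt; last by apply: sumr_ge0 => j _; exact: sqr_ge0.
apply: ler_sum => j _; rewrite -real_normK ?num_real //.
by rewrite ler_pXn2r // ?nnegrE ?(le_trans _ (h j)).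
Qed.

Lemma Dabs_ge0 (R : realType) m (w g : 'cV[R]_m) :
  (forall j, 0 < w j 0) -> forall j, 0 <= Dabs w g j 0.
Proof. by move=> hw j; rewrite mxE divr_ge0 // ltW. Qed.

Lemma Delta_le (R : realType) r (n : nat -> nat)
  (Pm : forall l : nat, 'M[R]_(n l, n l.-1)) k delta (w g : 'cV[R]_(n k)) :
  0 <= delta -> (forall j, 0 < w j 0) ->
  forall j, `|@Delta R r n Pm k delta (Dabs w g) j 0| <= Dabs w g j 0.
Proof.
move=> hd hw j; have h0 := @Dabs_ge0 _ _ w g hw j.
rewrite /Delta; case: (k == r); first by rewrite ger0_norm.
set c := Num.min _ _.
have c0 : 0 <= c.
  rewrite /c le_min ler01 andbT divr_ge0 ?mulr_ge0 //.
  - exact: spnorm_ge0.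
  - exact: enorm_ge0.
have c1 : c <= 1 by rewrite /c ge_min lexx orbT.
by rewrite mxE normrM ger0_norm // ger0_norm // ler_piMl.
Qed.

Lemma ret_bound (R : realType) (r : nat) (n : nat -> nat)
  (Rm : forall l : nat, 'M[R]_(n l.-1, n l))
  (Pm : forall l : nat, 'M[R]_(n l, n l.-1))
  (gf : forall l : nat, 'cV[R]_(n l) -> 'cV[R]_(n l))
  (eps : nat -> R) (imax : nat -> nat)
  (kR alpha tau kB : R) (vs : nat -> R)
  (LW : forall k : nat, 'cV[R]_(n k.+1) -> 'cV[R]_(n k.+1) -> 'cV[R]_(n k) -> Prop)
  k gh x0 delta w0 i xi xprev xout tr :
  @mofftr R r n Rm Pm gf eps imax kR alpha tau kB vs LW k gh x0 delta w0 i xi xprev xout tr ->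
  (k < r)%N -> enorm (Pm k.+1 *m (xprev - x0)) <= delta ->
  enorm (Pm k.+1 *m (xout - x0)) <= delta.
Proof.
elim => {k gh x0 delta w0 i xi xprev xout tr}.
- by [].
- by move=> k gh x0 delta w0 i xi xprev h _ kr _; apply: h.
- move=> k gh x0 delta w0 i xi xprev w s xout tr h _ _ _ _ _ _ IH kr _.
  by apply: IH => //; apply: h.
- move=> k gh x0 delta w0 i xi xprev w w0' xout' tr1 xout tr _ h _ _ _ _ g D _ _ _ _ x0' _ _ s _ IH kr _.
  by apply: IH => //; apply: h.
Qed.

Lemma enorm0 (R : realType) m : enorm (0 : 'cV[R]_m) = 0.
Proof. by rewrite /enorm big1 ?sqrtr0 // => j _; rewrite mxE expr0n. Qed.

Lemma main_bound (R : realType) (r : nat) (n : nat -> nat)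
  (Rm : forall l : nat, 'M[R]_(n l.-1, n l))
  (Pm : forall l : nat, 'M[R]_(n l, n l.-1))
  (gf : forall l : nat, 'cV[R]_(n l) -> 'cV[R]_(n l))
  (eps : nat -> R) (imax : nat -> nat)
  (kR alpha tau kB : R) (vs : nat -> R)
  (LW : forall k : nat, 'cV[R]_(n k.+1) -> 'cV[R]_(n k.+1) -> 'cV[R]_(n k) -> Prop) :
  1 <= alpha -> (forall j, 0 < vs j) ->
  forall k gh x0 delta w0 i xi xprev xout tr,
  @mofftr R r n Rm Pm gf eps imax kR alpha tau kB vs LW k gh x0 delta w0 i xi xprev xout tr ->
  (k <= r)%N -> 0 <= delta -> (forall j, 0 < w0 j 0) ->
  forall it, it \in tr ->
    enorm (tagged it).2 <= alpha * enorm (Dabs (tagged it).1.1 (tagged it).1.2).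
Proof.
move=> ha hvs k gh x0 delta w0 i xi xprev xout tr H.
have a0 : 0 <= alpha by apply: le_trans ha.
elim: H => {k gh x0 delta w0 i xi xprev xout tr}.
- by [].
- by [].
- move=> k gh x0 delta w0 i xi xprev w s xout tr _ _ _ hw0 hwi ts _ IH kr d0 w00 it.
  have wp : forall j, 0 < w j 0.
    move=> j; have [i0|ip] := posnP i; first by rewrite hw0.
    exact: lt_le_trans (hvs j) (hwi ip j).
  rewrite in_cons => /orP [/eqP -> /= | ]; last by apply: IH.
  case: ts => B [_ [_ [hs _]]].
  apply: (le_trans _ (ler_peMl (@enorm_ge0 _ _ _) ha)).
  apply: enorm_le => j; apply: le_trans (hs j) _.
  exact: le_trans (ler_norm _) (@Delta_le _ _ _ _ _ _ _ _ d0 wp j).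
- move=> k gh x0 delta w0 i xi xprev w w0' xout' tr1 xout tr _ _ _ _ hw0 hwi g D hw0' _ _ _ x0' sub IH1 s _ IH kr d0 w00 it.
  have wp : forall j, 0 < w j 0.
    move=> j; have [i0|ip] := posnP i; first by rewrite hw0.
    exact: lt_le_trans (hvs j) (hwi ip j).
  have w0p : forall j, 0 < w0' j 0 by move=> j; exact: lt_le_trans (hvs j) (hw0' j).
  have D0 : 0 <= alpha * enorm D by rewrite mulr_ge0 // enorm_ge0.
  rewrite in_cons mem_cat => /orP [/eqP -> /= | /orP [] ].
  + apply: le_trans (_ : alpha * enorm D <= _).
      apply: ret_bound sub _ _; first exact: kr.
      by rewrite subrr mulmx0 enorm0.
    apply: ler_wpM2l => //; apply: enorm_le => j.
    exact: @Delta_le _ _ _ _ _ _ _ _ d0 wp j.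
  + by apply: IH1 => //; apply: ltnW.
  + by apply: IH.
Qed.

Theorem lemma3p2 (R : realType) (r : nat) (n : nat -> nat)
  (Rm : forall l : nat, 'M[R]_(n l.-1, n l))
  (Pm : forall l : nat, 'M[R]_(n l, n l.-1))
  (f : forall l : nat, 'cV[R]_(n l) -> R)
  (gf : forall l : nat, 'cV[R]_(n l) -> 'cV[R]_(n l))
  (omega : R) (eps : nat -> R) (imax : nat -> nat)
  (kR alpha tau kB : R) (vs : nat -> R)
  (LW : forall k : nat, 'cV[R]_(n k.+1) -> 'cV[R]_(n k.+1) -> 'cV[R]_(n k) -> Prop)
  (x0 w0 xout : 'cV[R]_(n r)) (tr : seq (@iter_rec R n)) :
  (1 <= r)%N ->
  (forall l, (2 <= l <= r)%N -> \rank (Rm l) = minn (n l.-1) (n l)) ->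
  0 < omega ->
  (forall l, (2 <= l <= r)%N -> omega *: Pm l = (Rm l)^T) ->
  (forall l x, (1 <= l <= r)%N -> differentiable (f l) x /\
      forall v, 'd (f l) x v = dotv (gf l x) v) ->
  0 < kR < 1 -> 1 <= alpha -> 0 < tau <= 1 -> 1 <= kB ->
  (forall j, 0 < vs j <= 1) ->
  (forall j, 0 < w0 j 0) ->
  @mofftr R r n Rm Pm gf eps imax kR alpha tau kB vs LW r
    (gf r) x0 0 w0 0 x0 x0 xout tr ->
  forall it, it \in tr ->
    enorm (tagged it).2 <= alpha * enorm (Dabs (tagged it).1.1 (tagged it).1.2).
Proof.
move=> r1 _ _ _ _ _ ha _ _ hvs hw0 H it hit.
have hv : forall j, 0 < vs j by move=> j; case/andP: (hvs j).
have := @main_bound _ _ _ _ _ _ _ _ _ _ _ _ _ _ ha hv _ _ _ _ _ _ _ _ _ _ H.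
move=> /(_ (leqnn r) (lexx 0) hw0 it hit).
by [].
Qed.
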